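(* Let $n\ge 2$ be an integer, $\omega>0$ and $c>0$, and set $\mu_j=\omega^2+c\,(j-1)$ for $j=1,\dots,n$. Define $$\beta_j=-\sqrt{\mu_j}+\frac{1}{n-1}\sum_{k=1}^n\sqrt{\mu_k},\qquad j=1,\dots,n.$$ If $$c<\frac{2(2n-3)\,\omega^2}{(n-1)(n^2-3n+4)},$$ then $\beta_j>0$ for all $j=1,\dots,n$.
   Context: The $\mu_j$ are the eigenvalues of the interaction matrix $A=\omega^2 I+cM_{\rm K}$, where $M_{\rm K}$ (the Krawtchouk matrix) has eigenvalues $\lambda_j=j-1$; $c$ is the coupling strength. *)

(* Defs.v *)
From mathcomp Require Import all_boot all_order all_algebra.
Set Implicit Arguments. Unset Strict Implicit. Unset Printing Implicit Defensive.
Import Order.TTheory GRing.Theory Num.Theory.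
Local Open Scope ring_scope.

(* Indices j = 1..n of the paper are represented by i : 'I_n with j = i + 1,
   so mu_j = omega^2 + c (j - 1) = omega^2 + c * i. *)
Definition mu (R : rcfType) (omega c : R) (n : nat) (i : 'I_n) : R :=
  omega ^+ 2 + c * i%:R.

Definition beta (R : rcfType) (omega c : R) (n : nat) (i : 'I_n) : R :=
  - Num.sqrt (mu omega c i)
  + (n.-1)%:R^-1 * \sum_(k < n) Num.sqrt (mu omega c k).

(* Main.v *)
Require Import Defs.
From mathcomp Require Import all_boot all_order all_algebra.
From mathcomp Require Import ring lra.
Import Order.TTheory GRing.Theory Num.Theory.
Local Open Scope ring_scope.

Lemma sumk (R : rcfType) n : (\sum_(k < n) (k%:R : R)) * 2 = n%:R * (n%:R - 1).
Proof.
elim: n => [|n IH]; first by rewrite big_ord0 mul0r mul0r.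
rewrite big_ord_recr /= mulrDl IH -addn1 natrD. ring.
Qed.

Theorem proposition3 (R : rcfType) (n : nat) (omega c : R) :
  (2 <= n)%N -> 0 < omega -> 0 < c ->
  c < (2 * (2 * n%:R - 3) * omega ^+ 2)
      / ((n%:R - 1) * (n%:R ^+ 2 - 3 * n%:R + 4)) ->
  forall j : 'I_n, 0 < beta omega c j.
Proof.
move=> hn ho hc hlt j.
set N : R := n%:R.
have hN : 2 <= N by rewrite /N (ler_nat R 2 n).
have hD : 0 < (N - 1) * (N ^+ 2 - 3 * N + 4).
  apply: mulr_gt0; first lra.
  have -> : N ^+ 2 - 3 * N + 4 = (N - 2) * (N - 1) + 2 by ring.
  apply: ltr_wpDl; last lra. apply: mulr_ge0; lra.
have hc2 : c * ((N - 1) * (N ^+ 2 - 3 * N + 4)) < 2 * (2 * N - 3) * omega ^+ 2.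
  by rewrite -ltr_pdivlMr.
have key : c * (N - 1) * (N - 2) < 4 * omega ^+ 2.
  have h1 : c * (N - 1) * (N - 2) * (2 * N - 3) <= 2 * (c * ((N - 1) * (N ^+ 2 - 3 * N + 4))).
    have h0 : 0 <= c * (N - 1) * (N + 2) by apply: mulr_ge0; [apply: mulr_ge0|]; lra.
    have -> : 2 * (c * ((N - 1) * (N ^+ 2 - 3 * N + 4))) =
       c * (N - 1) * (N - 2) * (2 * N - 3) + c * (N - 1) * (N + 2) by ring.
    lra.
  have h2 : c * (N - 1) * (N - 2) * (2 * N - 3) < (4 * omega ^+ 2) * (2 * N - 3).
    have -> : (4 * omega ^+ 2) * (2 * N - 3) = 2 * (2 * (2 * N - 3) * omega ^+ 2) by ring.
    lra.
  by rewrite -(ltr_pM2r (_ : 0 < 2 * N - 3)) //; lra.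
have hn1 : (n.-1)%:R = N - 1 by rewrite /N -(subn1 n) natrB ?(leq_trans _ hn).
set S := Num.sqrt (omega ^+ 2 + c * (N - 1)).
have hpos : forall k : 'I_n, 0 <= omega ^+ 2 + c * k%:R.
  move=> k; apply: addr_ge0; [exact: sqr_ge0 | apply: mulr_ge0; [lra|exact: ler0n]].
have hkN : forall k : 'I_n, (k%:R : R) <= N - 1.
  move=> k; rewrite -hn1 ler_nat; rewrite -ltnS prednK ?ltn_ord //.
  exact: leq_trans hn.
have hS2 : S ^+ 2 = omega ^+ 2 + c * (N - 1).
  apply: sqr_sqrtr; apply: addr_ge0; [exact: sqr_ge0 | apply: mulr_ge0; lra].
have hs : forall k : 'I_n,
   Num.sqrt (mu omega c k) <= S /\ omega <= Num.sqrt (mu omega c k) /\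
   Num.sqrt (mu omega c k) ^+ 2 = omega ^+ 2 + c * k%:R.
  move=> k; rewrite /mu; split; last split.
  - rewrite ler_sqrt; last (apply: addr_ge0; [exact: sqr_ge0 | apply: mulr_ge0; lra]).
    rewrite lerD2l; apply: ler_wpM2l; [lra | exact: hkN].
  - have {1}-> : omega = Num.sqrt (omega ^+ 2) by rewrite sqrtr_sqr ger0_norm // ltW.
    rewrite ler_sqrt ?hpos // lerDl; apply: mulr_ge0; [lra|exact: ler0n].
  - exact: sqr_sqrtr.
have hSo : omega <= S.
  have := hs j; lra.
have hterm : forall k : 'I_n,
    (S - Num.sqrt (mu omega c k)) * (S + omega) <= c * (N - 1) - c * k%:R.
  move=> k; have [h1 [h2 h3]] := hs k.
  have h4 : (S - Num.sqrt (mu omega c k)) * (S + omega) <=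
            (S - Num.sqrt (mu omega c k)) * (S + Num.sqrt (mu omega c k)).
    apply: ler_wpM2l; lra.
  apply: (le_trans h4).
  have -> : (S - Num.sqrt (mu omega c k)) * (S + Num.sqrt (mu omega c k)) =
     S ^+ 2 - Num.sqrt (mu omega c k) ^+ 2 by ring.
  rewrite hS2 h3; lra.
set T := \sum_(k < n) Num.sqrt (mu omega c k).
have hsum : (N * S - T) * (S + omega) <= c * N * (N - 1) / 2.
  have -> : (N * S - T) * (S + omega) =
      \sum_(k < n) (S - Num.sqrt (mu omega c k)) * (S + omega).
    rewrite -mulr_suml sumrB sumr_const card_ord /T /N mulr_natl //.
  apply: (le_trans (ler_sum _ (fun k _ => hterm k))).
  rewrite sumrB sumr_const card_ord -mulr_sumr.
  have hk := sumk R n. rewrite -/N in hk.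
  have -> : \sum_(i < n) (i%:R : R) = N * (N - 1) / 2.
    by rewrite -hk mulfK // pnatr_eq0.
  rewrite -mulr_natr -/N le_eqVlt; apply/orP; left; apply/eqP; field.
  by [].
have hT : (N - 1) * S < T.
  have hSS : 2 * omega ^+ 2 + c * (N - 1) <= S * (S + omega).
    have h5 : omega * omega <= S * omega by apply: ler_wpM2r; lra.
    have -> : S * (S + omega) = S ^+ 2 + S * omega by ring.
    rewrite hS2 !expr2; lra.
  have : N * S - T < S.
    rewrite ltNge; apply/negP => hge.
    have h6 : S * (S + omega) <= (N * S - T) * (S + omega) by apply: ler_wpM2r; lra.
    have h7 : c * N * (N - 1) / 2 = c * (N - 1) + c * (N - 1) * (N - 2) / 2 by field; rewrite ?oner_eq0 ?pnatr_eq0.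
    have h8 : 2 * omega ^+ 2 + c * (N - 1) <= c * (N - 1) + c * (N - 1) * (N - 2) / 2.
      by rewrite -h7; apply: le_trans hSS (le_trans h6 hsum).
    move: h8 key; set X := c * (N - 1) * (N - 2); set Y := c * (N - 1); set W := omega ^+ 2.
    lra.
  lra.
rewrite /beta hn1 -/T.
have [h1 _] := hs j.
have hN1 : 0 < N - 1 by lra.
rewrite addrC subr_gt0 ltr_pdivlMl //.
apply: le_lt_trans hT; apply: ler_wpM2l; lra.
Qed.
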